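(* Suppose that a filtered vector space $V$ has positive Harder and Narasimhan data $\operatorname{HN}(\overrightarrow{\mu},\overrightarrow{r})$. Fixing a nonnegative integer $z \geq 0$, for each nonnegative integer $m \geq 0$, let $H^{\# S_{m,z}(\overrightarrow{\mu})}$ be the subspace of $V^{\otimes m}$ given by $$H^{\# S_{m,z}(\overrightarrow{\mu})} := \sum_{i=1}^{\# S_{m,z}(\overrightarrow{\mu})} \bigotimes_{j=1}^m V_{a_{ji}}.$$ Then $$\lim_{m \to \infty} \frac{\dim H^{\# S_{m,z}(\overrightarrow{\mu})}}{\dim V^{\otimes m}} = 1.$$
   Context: All vector spaces are over a fixed algebraically closed field $\mathbf{k}$ of characteristic zero. $V$ is a finite dimensional $\mathbf{k}$-vector space with a filtration (in the sense of Faltings and Wüstholz) $V = F^{\lambda_0}V \supsetneq F^{\lambda_1}V \supsetneq \dots \supsetneq F^{\lambda_n}V \supsetneq F^{\lambda_{n+1}}V = 0$, for real numbers $0 \leq \lambda_0 < \lambda_1 < \dots < \lambda_{n+1}$; slopes $\mu(\cdot)$ of subspaces and subquotients are computed with respect to the induced filtration. By Faltings–Wüstholz, $V$ admits a canonical Harder and Narasimhan filtration $0 = V_0 \subsetneq V_1 \subsetneq \dots \subsetneq V_\ell = V$ whose successive quotients $V_i/V_{i-1}$ are semistable with strictly decreasing slopes. Put $\mu_i := \mu(V_i/V_{i-1})$, $r_i := \dim(V_i/V_{i-1})$, $d_i := r_i\mu_i$ for $i=1,\dots,\ell$, $\overrightarrow{\mu} = (\mu_1,\dots,\mu_\ell)$,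 $\overrightarrow{r} = (r_1,\dots,r_\ell)$; this is the Harder and Narasimhan data $\operatorname{HN}(\overrightarrow{\mu},\overrightarrow{r})$, called positive if $\sum_{i=1}^\ell d_i > 0$. Let $[\ell] := \{1,\dots,\ell\}$. For $\mathbf{a} = (a_1,\dots,a_m) \in [\ell]^m$ set $v_{\overrightarrow{\mu}}(\mathbf{a}) := \sum_{j=1}^m \mu_{a_j}$, and $S_{m,z}(\overrightarrow{\mu}) := \{\mathbf{a} \in [\ell]^m : \sum_{j=1}^m \mu_{a_j} \geq z\}$. Write the elements of $[\ell]^m$ in decreasing order with respect to $v_{\overrightarrow{\mu}}(\cdot)$ as $\mathbf{a}_i = (a_{1i},\dots,a_{mi})$, $i = 1, 2, \dots$; thus $S_{m,z}(\overrightarrow{\mu})$ consists of the first $\# S_{m,z}(\overrightarrow{\mu})$ elements $\mathbf{a}_1,\dots,\mathbf{a}_{\# S_{m,z}(\overrightarrow{\mu})}$. *)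

(* Defs.v *)
From HB Require Import structures.
From mathcomp Require Import all_boot all_order all_algebra.
From mathcomp Require Import all_classical all_reals all_analysis.

Set Implicit Arguments.
Unset Strict Implicit.
Unset Printing Implicit Defensive.

Import Order.TTheory GRing.Theory Num.Theory.
Local Open Scope ring_scope.

Section Filtrations.
Variables (k : fieldType) (V : vectType k) (R : realType).

(* A Faltings--Wustholz filtration with jumps lam 0 < ... < lam N.+1:
   V = F 0 ⊋ F 1 ⊋ ... ⊋ F N ⊋ F N.+1 = 0, where F i stands for F^{lam i} V. *)
Definition is_filtration (N : nat) (lam : nat -> R) (F : nat -> {vspace V}) :=
  [/\ 0 <= lam 0%N,
      forall i, (i <= N)%N -> lam i < lam i.+1,
      F 0%N = fullv, F N.+1 = 0%VS &
      forall i, (i <= N)%N -> (F i.+1 <= F i)%VS && (F i.+1 != F i)].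

Variables (N : nat) (lam : nat -> R) (F : nat -> {vspace V}).

(* dimension of F^{lam i} of the subquotient W'/W with the induced filtration:
   F^{lam i}(W'/W) = ((F i :&: W') + W) / W *)
Definition fdim (W W' : {vspace V}) (i : nat) : R :=
  (\dim (F i :&: W'))%:R - (\dim (F i :&: W))%:R.

(* degree  sum_lambda lambda * dim Gr^lambda (W'/W) *)
Definition fdeg (W W' : {vspace V}) : R :=
  \sum_(i < N.+1) lam i * (fdim W W' i - fdim W W' i.+1).

Definition frank (W W' : {vspace V}) : nat := (\dim W' - \dim W)%N.

Definition slope (W W' : {vspace V}) : R := fdeg W W' / (frank W W')%:R.

Definition semistable (W W' : {vspace V}) : Prop :=
  forall U : {vspace V}, (W <= U)%VS -> (U <= W')%VS -> U != W ->
    slope W U <= slope W W'.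

Definition is_HN (ell : nat) (Vf : nat -> {vspace V}) : Prop :=
  [/\ (0 < ell)%N, Vf 0%N = 0%VS, Vf ell = fullv,
      forall i, (i < ell)%N -> (Vf i <= Vf i.+1)%VS && (Vf i != Vf i.+1) &
      (forall i, (i < ell)%N -> semistable (Vf i) (Vf i.+1)) /\
      forall i, (i.+1 < ell)%N -> slope (Vf i.+1) (Vf i.+2) < slope (Vf i) (Vf i.+1)].

(* HN data: mu_i and r_i for i = 1..ell *)
Definition HN_mu (Vf : nat -> {vspace V}) (i : nat) : R := slope (Vf i.-1) (Vf i).
Definition HN_r (Vf : nat -> {vspace V}) (i : nat) : nat := frank (Vf i.-1) (Vf i).

Definition HN_positive (ell : nat) (Vf : nat -> {vspace V}) : Prop :=
  0 < \sum_(1 <= i < ell.+1) (HN_r Vf i)%:R * HN_mu Vf i.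

End Filtrations.

Section Tensors.
Variables (k : fieldType) (V : vectType k).

(* V^{⊗ m} realised in coordinates w.r.t. the basis vbasis fullv of V:
   functions on m-tuples of basis indices. *)
Definition tens_index (m : nat) := {ffun 'I_m -> 'I_(\dim (fullv : {vspace V}))}.
Definition tensor_power (m : nat) := {ffun tens_index m -> k^o}.

Definition pure_tensor (m : nat) (vs : 'I_m -> V) : tensor_power m :=
  [ffun i : tens_index m => \prod_(j < m) coord (vbasis fullv) (i j) (vs j)].

Definition tens_sub (m : nat) (W : 'I_m -> {vspace V}) : {vspace tensor_power m} :=
  (<< [seq pure_tensor (fun j => (vbasis (W j))`_(f j)) | f : tens_index m] >>)%VS.

End Tensors.

(* H^{#S_{m,z}} = sum over a in S_{m,z}(mu) of V_{a_1} ⊗ ... ⊗ V_{a_m};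
   an element a of [ell]^m is encoded by a : {ffun 'I_m -> 'I_ell}, a_j = (a j).+1 *)
Definition H_Smz (k : fieldType) (V : vectType k) (R : realType)
    (mu : nat -> R) (ell : nat) (Vf : nat -> {vspace V}) (m z : nat)
    : {vspace tensor_power V m} :=
  (\sum_(a : {ffun 'I_m -> 'I_ell} | (z%:R <= \sum_(j < m) mu (a j).+1)%R)
      tens_sub (fun j => Vf (a j).+1))%VS.

(* Main.v *)
Require Import Defs.
From HB Require Import structures.
From mathcomp Require Import all_boot all_order all_algebra.
From mathcomp Require Import all_classical all_reals all_analysis.
From mathcomp Require Import ring lra.
Import Order.TTheory GRing.Theory Num.Theory.
Import numFieldNormedType.Exports.
Local Open Scope classical_set_scope.
Local Open Scope ring_scope.

Section LA.
Variables (k : fieldType) (V : vectType k).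
Local Notation n := (\dim (fullv : {vspace V})).
Local Notation B := (vbasis (fullv : {vspace V})).

Lemma span_coef_nat (X : seq V) v : v \in <<X>>%VS ->
  exists c : nat -> k, v = \sum_(i < size X) c i *: X`_i.
Proof.
elim: X v => [|x X IH] v.
  by rewrite span_nil memv0 => /eqP ->; exists (fun _ => 0); rewrite big_ord0.
rewrite span_cons => /memv_addP [y /vlineP [a ->]] [w /IH [c ->] ->].
exists (fun i => if i is i'.+1 then c i' else a).
by rewrite big_ord_recl /=.
Qed.

Lemma span_coef (X : seq V) v : (size X <= n)%N -> v \in <<X>>%VS ->
  exists c : 'I_n -> k, v = \sum_(t < n) c t *: X`_t.
Proof.
move=> hs /span_coef_nat [c ->]; exists (fun t => c t).
rewrite (big_ord_widen n (fun i => c i *: X`_i) hs) big_mkcond /=.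
apply: eq_bigr => i _; case: ifP => // /negbT; rewrite -leqNgt => hi.
by rewrite nth_default // scaler0.
Qed.

Lemma pure_tensor_expand m (X : 'I_m -> seq V) (c : 'I_m -> 'I_n -> k) :
  pure_tensor (fun j => \sum_(t < n) c j t *: (X j)`_t) =
  \sum_(f : tens_index V m) (\prod_j c j (f j)) *: pure_tensor (fun j => (X j)`_(f j)).
Proof.
apply/ffunP => i; rewrite ffunE sum_ffunE.
under eq_bigr do rewrite linear_sum.
under eq_bigr do under eq_bigr do rewrite linearZ.
rewrite bigA_distr_bigA /=.
apply: eq_bigr => f _; rewrite !ffunE /= big_split /=.
done.
Qed.

Lemma pure_tensor_span m (X : 'I_m -> seq V) (v : 'I_m -> V) :
  (forall j, size (X j) <= n)%N -> (forall j, v j \in <<X j>>%VS) ->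
  pure_tensor v \in
    <<[seq pure_tensor (fun j => (X j)`_(f j)) | f : tens_index V m]>>%VS.
Proof.
move=> hs hv.
have [c hc] : exists c : 'I_m -> 'I_n -> k,
    forall j, v j = \sum_(t < n) c j t *: (X j)`_t.
  apply: (@fin_all_exists _ (fun _ => 'I_n -> k)
    (fun j c => v j = \sum_(t < n) c t *: (X j)`_t)) => j.
  exact: span_coef.
have -> : pure_tensor v = pure_tensor (fun j => \sum_(t < n) c j t *: (X j)`_t).
  by apply/ffunP => i; rewrite !ffunE; apply: eq_bigr => j _; rewrite -hc.
rewrite pure_tensor_expand; apply: rpred_sum => f _; apply: rpredZ.
by apply: memv_span; apply: map_f; rewrite mem_enum.
Qed.

Lemma delta_pure m (i : tens_index V m) :
  pure_tensor (fun j => B`_(i j)) = [ffun i' => ((i == i')%:R : k^o)].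
Proof.
have fB : free B by apply: basis_free (vbasisP _).
apply/ffunP => i'; rewrite !ffunE.
under eq_bigr do rewrite coord_free //.
case: (eqVneq i i') => [<-|ne]; first by rewrite big1 // => j _; rewrite eqxx.
have [j hj] : exists j, i j != i' j.
  apply/existsP; apply: contraR ne; rewrite negb_exists => /forallP h.
  by apply/eqP/ffunP => j; apply/eqP; move/negPn: (h j).
by rewrite (bigD1 j) //= (negPf hj) mul0r.
Qed.

Lemma tensor_span_all m (e : seq V) : (size e <= n)%N -> (fullv <= <<e>>)%VS ->
  (fullv <= <<[seq pure_tensor (fun j => e`_(f j)) | f : tens_index V m]>>)%VS.
Proof.
move=> hs hfull; apply/subvP => t _.
have -> : t = \sum_i t i *: pure_tensor (fun j => B`_(i j)).
  apply/ffunP => i'; under eq_bigr do rewrite delta_pure.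
  rewrite sum_ffunE (bigD1 i') //= !ffunE eqxx /=.
  rewrite big1 ?addr0; first exact: (esym (mulr1 _)).
  move=> i ne; rewrite !ffunE (negPf ne) /=; exact: mulr0.
apply: rpred_sum => i _; apply: rpredZ; apply: pure_tensor_span => // j.
exact: (subvP hfull _ (memvf _)).
Qed.

Lemma dim_tensor m : \dim (fullv : {vspace tensor_power V m}) = (n ^ m)%N.
Proof. by rewrite dimvf /dim /= card_ffun !card_ord muln1. Qed.

Lemma dim_lower m (e : seq V) (good : pred (tens_index V m))
    (H : {vspace tensor_power V m}) :
  (size e <= n)%N -> (fullv <= <<e>>)%VS ->
  (forall b, good b -> pure_tensor (fun j => e`_(b j)) \in H) ->
  (n ^ m <= \dim H + #|predC good|)%N.
Proof.
move=> hs hfull hgood.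
set Bad := <<[seq pure_tensor (fun j => e`_(f j)) | f : tens_index V m in predC good]>>%VS.
have hsub : (fullv <= H + Bad)%VS.
  have h1 := tensor_span_all m e hs hfull.
  apply: subv_trans h1 _.
  apply/span_subvP => x /mapP [f _ ->].
  case: (boolP (good f)) => g.
    by rewrite -[X in X \in _]addr0; apply: memv_add; [exact: hgood | exact: mem0v].
  rewrite -[X in X \in _]add0r; apply: memv_add; first exact: mem0v.
  by apply: memv_span; apply: fintype.image_f.
rewrite -(dim_tensor m); apply: leq_trans (dimvS hsub) _.
apply: leq_trans (dimv_add_leqif H Bad).1 _.
rewrite leq_add2l; apply: leq_trans (dim_span _) _.
by rewrite size_image.
Qed.

End LA.

Section Cheb.
Variables (R : realFieldType) (n : nat).

Lemma key_moment (u : 'I_n -> R) m (j j' : 'I_m) : \sum_t u t = 0 ->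
  n%:R * \sum_(b : {ffun 'I_m -> 'I_n}) u (b j) * u (b j')
  = (j == j')%:R * (n%:R ^+ m * \sum_t (u t ^+ 2)).
Proof.
move=> u0; case: (eqVneq j j') => [<-|ne].
  have -> : \sum_(b : {ffun 'I_m -> 'I_n}) u (b j) * u (b j) =
      \sum_(b : {ffun 'I_m -> 'I_n}) \prod_i (if i == j then u (b i) ^+ 2 else 1).
    apply: eq_bigr => b _; rewrite (bigD1 j) //= eqxx big1 ?mulr1 ?expr2 //.
    by move=> i /negPf ->.
  rewrite -(bigA_distr_bigA (fun i t => if i == j then u t ^+ 2 else 1)) /=.
  rewrite (bigD1 j) //= eqxx.
  have -> : \prod_(i | i != j) \sum_t (if i == j then u t ^+ 2 else 1)
      = \prod_(i | i != j) (n%:R : R).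
    by apply: eq_bigr => i /negPf ->; rewrite sumr_const card_ord.
  rewrite (eq_bigl (fun i => i \in predC1 j)) // prodr_const cardC1 card_ord.
  case: m j j' => [[] //|m] j j' /=.
  rewrite exprS; ring.
have ne' : j' != j by rewrite eq_sym.
have -> : \sum_(b : {ffun 'I_m -> 'I_n}) u (b j) * u (b j') =
    \sum_(b : {ffun 'I_m -> 'I_n})
       \prod_i (if i == j then u (b i) else if i == j' then u (b i) else 1).
  apply: eq_bigr => b _; rewrite (bigD1 j) //= eqxx (bigD1 j') //= (negPf ne') eqxx.
  rewrite big1 ?mulr1 // => i /andP [h1 h2]; by rewrite (negPf h1) (negPf h2).
rewrite -(bigA_distr_bigA (fun i t => if i == j then u t else if i == j' then u t else 1)) /=.
rewrite (bigD1 j) //= eqxx u0 !mul0r mulr0.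
by [].
Qed.

Lemma second_moment (u : 'I_n -> R) m : \sum_t u t = 0 ->
  n%:R * \sum_(b : {ffun 'I_m -> 'I_n}) (\sum_j u (b j)) ^+ 2
  = m%:R * (n%:R ^+ m * \sum_t (u t ^+ 2)).
Proof.
move=> u0.
have E : forall b : {ffun 'I_m -> 'I_n},
    (\sum_j u (b j)) ^+ 2 = \sum_j \sum_j' u (b j) * u (b j').
  by move=> b; rewrite expr2 mulr_suml; apply: eq_bigr => j _; rewrite mulr_sumr.
under eq_bigr do rewrite E.
rewrite exchange_big /=.
under eq_bigr do rewrite exchange_big /=.
rewrite big_distrr /=.
under eq_bigr do rewrite big_distrr /=.
under eq_bigr do under eq_bigr do rewrite key_moment //.
set X := n%:R ^+ m * _.
have -> : \sum_(j < m) \sum_(j' < m) (j == j')%:R * X = \sum_(j < m) X.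
  apply: eq_bigr => j _; rewrite (bigD1 j) //= eqxx mul1r big1 ?addr0 //.
  by move=> j' /negPf; rewrite eq_sym => ->; rewrite mul0r.
by rewrite sumr_const card_ord mulr_natl.
Qed.

Lemma count_bad (w : 'I_n -> R) (M z : R) m :
  n%:R * M = \sum_t w t -> z <= m%:R * M / 2 -> 0 <= M ->
  (#|[pred b : {ffun 'I_m -> 'I_n} | \sum_j w (b j) < z]|)%:R
     * (m%:R * M / 2) ^+ 2 * n%:R
  <= m%:R * (n%:R ^+ m * \sum_t ((w t - M) ^+ 2)).
Proof.
move=> hM hz M0.
have u0 : \sum_t (w t - M) = 0.
  by rewrite sumrB sumr_const card_ord -mulr_natl hM subrr.
rewrite -(@second_moment _ m u0) [_ * n%:R]mulrC; apply: ler_wpM2l; first exact: ler0n.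
set a := m%:R * M / 2.
have a0 : 0 <= a by rewrite /a mulr_ge0 ?invr_ge0 ?mulr_ge0 ?ler0n.
rewrite mulr_natl -sumr_const.
rewrite big_mkcond /=; apply: ler_sum => b _.
case: ifP => [hb|_]; last exact: sqr_ge0.
move: hb; rewrite inE => hb.
have hs : \sum_j (w (b j) - M) = \sum_j w (b j) - m%:R * M.
  by rewrite sumrB sumr_const card_ord mulr_natl.
rewrite hs; move: hb; set s := \sum_j w (b j) => hb.
have : s - m%:R * M < - a by rewrite /a; lra.
move=> h; nra.
Qed.

End Cheb.

Lemma final_lim (R : realType) (r : nat -> R) (C : R) (m1 : nat) : 0 <= C ->
  (forall m, (m1 <= m)%N -> (0 < m)%N -> 0 <= 1 - r m <= C / m%:R) ->
  r @ \oo --> (1 : R).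
Proof.
move=> C0 h; apply/cvgrPdist_le => eps eps0.
have hK := archi_boundP (divr_ge0 C0 (ltW eps0)).
set K := Num.Def.archi_bound (C / eps) in hK.
exists (maxn (maxn m1 1) K) => // m /= hm.
move: hm; rewrite !geq_max => /andP [/andP [hm1 hm0] hmK].
have /andP [h1 h2] := h m hm1 hm0.
rewrite ger0_norm //.
have mpos : 0 < m%:R :> R by rewrite ltr0n.
have hmK' : C / eps < m%:R.
  apply: (lt_le_trans hK); by rewrite ler_nat.
suff key : C / m%:R <= (eps : R) by exact: le_trans h2 key.
rewrite Num.Theory.ler_pdivrMr //.
move: hmK'; rewrite Num.Theory.ltr_pdivrMr // => hC.
by rewrite mulrC; apply: ltW.
Qed.

Lemma ratio_bound (R : realFieldType) (D b N m M n Q : R) :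
  0 < N -> 0 < m -> 0 < M -> 0 < n -> N <= D + b -> D <= N ->
  b * (m * M / 2) ^+ 2 * n <= m * (N * Q) ->
  0 <= 1 - D / N <= (4 * Q / (M ^+ 2 * n)) / m.
Proof.
move=> N0 m0 M0 n0 h1 h2 h3; apply/andP; split.
  by rewrite subr_ge0 ler_pdivrMr // mul1r.
have hb : 1 - D / N <= b / N.
  rewrite Num.Theory.ler_pdivlMr // mulrBl mul1r divfK ?gt_eqF //; lra.
apply: (le_trans hb).
have M2 : 0 < M ^+ 2 * n * m by rewrite !mulr_gt0 ?exprn_gt0.
have key : b * (M ^+ 2 * n * m) <= 4 * Q * N.
  have m4 : 0 < m / 4 by rewrite divr_gt0.
  rewrite -(ler_pM2l m4).
  have -> : m / 4 * (b * (M ^+ 2 * n * m)) = b * (m * M / 2) ^+ 2 * n by field.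
  by have -> : m / 4 * (4 * Q * N) = m * (N * Q) by field.
have -> : 4 * Q / (M ^+ 2 * n) / m = 4 * Q / (M ^+ 2 * n * m).
  by field; rewrite !gt_eqF.
rewrite ler_pdivrMr // mulrAC ler_pdivlMr //.
Qed.

Set Implicit Arguments.
Unset Strict Implicit.

Lemma mem_bigcat (T I : eqType) (r : seq I) (G : I -> seq T) p :
  p \in \big[cat/[::]]_(i <- r) G i -> exists2 i, i \in r & p \in G i.
Proof.
elim: r => [|i r IH]; first by rewrite big_nil.
rewrite big_cons mem_cat => /orP [h|/IH [i' hi' h]].
  by exists i; rewrite ?mem_head.
by exists i'; rewrite ?in_cons ?hi' ?orbT.
Qed.

Lemma sum_bigcat (R : nmodType) (T I : Type) (r : seq I) (G : I -> seq T) (F : T -> R) :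
  \sum_(p <- \big[cat/[::]]_(i <- r) G i) F p = \sum_(i <- r) \sum_(p <- G i) F p.
Proof.
elim: r => [|i r IH]; first by rewrite !big_nil.
by rewrite !big_cons big_cat IH.
Qed.

Section AB.
Variables (k : fieldType) (V : vectType k) (Vf : nat -> {vspace V}) (ell : nat).
Hypotheses (h0 : Vf 0%N = 0%VS) (hl : Vf ell = fullv)
  (hinc : forall i, (i < ell)%N -> (Vf i <= Vf i.+1)%VS).
Local Notation n := (\dim (fullv : {vspace V})).

Definition Cf i := (Vf i.+1 :\: Vf i)%VS.
Definition Plj j := \big[cat/[::]]_(0 <= i < j) [seq (x, i) | x <- vbasis (Cf i)].
Definition Pl := Plj ell.

Lemma dimCf i : (i < ell)%N -> (\dim (Cf i) + \dim (Vf i))%N = \dim (Vf i.+1).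
Proof.
move=> hi; rewrite -(dimv_cap_compl (Vf i.+1) (Vf i)) (capv_idPr (hinc hi)).
by rewrite addnC.
Qed.

Lemma size_Plj j : (j <= ell)%N -> size (Plj j) = \dim (Vf j).
Proof.
elim: j => [|j IH] hj; first by rewrite /Plj big_geq // h0 dimv0.
rewrite /Plj big_nat_recr //= size_cat -/(Plj j) IH ?(ltnW hj) //.
by rewrite size_map size_tuple addnC dimCf.
Qed.

Lemma size_Pl : size Pl = n.
Proof. by rewrite /Pl size_Plj // hl. Qed.

Lemma span_Plj j : (j <= ell)%N -> (<<unzip1 (Plj j)>> = Vf j)%VS.
Proof.
elim: j => [|j IH] hj; first by rewrite /Plj big_geq // h0 span_nil.
rewrite /Plj big_nat_recr //= /unzip1 map_cat span_cat -/(Plj j) IH ?(ltnW hj) //.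
rewrite -map_comp map_id (span_basis (vbasisP _)) addvC /Cf addv_diff.
exact: (elimT addv_idPl (hinc hj)).
Qed.

Lemma span_Pl : (<<unzip1 Pl>> = fullv)%VS.
Proof. by rewrite /Pl span_Plj // hl. Qed.

Lemma mem_Pl p : p \in Pl -> (p.2 < ell)%N /\ p.1 \in Vf p.2.+1.
Proof.
rewrite /Pl /Plj => /mem_bigcat [i]; rewrite mem_index_iota => /andP [_ hi].
move=> /mapP [x hx ->] /=; split => //.
exact: (subvP (diffvSl _ _) _ (vbasis_mem hx)).
Qed.

Lemma sum_Pl (R : pzSemiRingType) (F : nat -> R) :
  \sum_(p <- Pl) F p.2 = \sum_(0 <= i < ell) (\dim (Cf i))%:R * F i.
Proof.
rewrite /Pl /Plj sum_bigcat; apply: eq_bigr => i _.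
rewrite big_map /= big_tnth sumr_const card_ord size_tuple.
by rewrite mulr_natl.
Qed.

End AB.

Unset Implicit Arguments.

Theorem theorem1p5 (k : closedFieldType) (hk : [pchar k] =i pred0)
    (V : vectType k) (R : realType) (N : nat) (lam : nat -> R)
    (F : nat -> {vspace V}) (ell : nat) (Vf : nat -> {vspace V}) (z : nat) :
  is_filtration N lam F ->
  is_HN N lam F ell Vf ->
  HN_positive N lam F ell Vf ->
  (fun m : nat =>
     (\dim (H_Smz (HN_mu N lam F Vf) ell Vf m z))%:R
       / (\dim (fullv : {vspace tensor_power V m}))%:R : R)
    @ \oo --> (1 : R).
Proof.
move=> _ [ell0 h0 hl hinc_raw _] hpos.
have hinc : forall i, (i < ell)%N -> (Vf i <= Vf i.+1)%VS.
  by move=> i hi; have /andP [] := hinc_raw i hi.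
set mu := HN_mu N lam F Vf.
set n := \dim (fullv : {vspace V}).
set P := Pl Vf ell.
set e := unzip1 P.
have sP : size P = n by exact: size_Pl h0 hl hinc.
pose lev (t : nat) := (nth (0, 0%N) P t).2.
pose w (t : 'I_n) := mu (lev t).+1.
have hlev : forall t : 'I_n, (lev t < ell)%N /\ e`_t \in Vf (lev t).+1.
  move=> t; have tP : (t < size P)%N by rewrite sP.
  have := mem_Pl (mem_nth (0, 0%N) tP).
  by rewrite /e /unzip1 (nth_map (0, 0%N)).
have hsum : \sum_t w t = \sum_(1 <= i < ell.+1) (HN_r Vf i)%:R * HN_mu N lam F Vf i.
  rewrite big_add1 /= /w /lev.
  rewrite -(big_mkord xpredT (fun t => mu (nth (0, 0%N) P t).2.+1)) -sP.
  rewrite -(big_nth (0, 0%N) xpredT (fun p => mu p.2.+1)).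
  rewrite (sum_Pl Vf ell (fun i => mu i.+1)).
  apply: eq_big_nat => i /andP [_ hi].
  by rewrite /HN_r /frank /= -(dimCf hinc hi) addnK.
have npos : (0 < n)%N.
  rewrite lt0n; apply/negP => /eqP n0; move: hpos; rewrite /HN_positive -hsum.
  have -> : \sum_t w t = 0.
    by apply: big1 => t _; have := leq_trans (ltn_ord t) (eq_leq n0).
  by rewrite Order.POrderTheory.ltxx.
set M := (\sum_t w t) / n%:R.
have hM : n%:R * M = \sum_t w t by rewrite mulrC divfK // pnatr_eq0 -lt0n.
have M0 : 0 < M by rewrite divr_gt0 ?ltr0n // hsum.
set Q := \sum_t ((w t - M) ^+ 2).
have Q0 : 0 <= Q by apply: sumr_ge0 => t _; apply: sqr_ge0.
apply: (@final_lim _ _ (4 * Q / (M ^+ 2 * n%:R)) (Num.Def.archi_bound (2 * z%:R / M))).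
  apply: Num.Theory.divr_ge0; first by apply: mulr_ge0 => //; lra.
  by apply: mulr_ge0; [exact: sqr_ge0 | exact: ler0n].
move=> m hm1 hm0.
rewrite dim_tensor natrX.
set D := \dim _.
pose good := fun b : tens_index V m => z%:R <= \sum_j w (b j).
have hgood : forall b, good b -> pure_tensor (fun j => e`_(b j)) \in
    H_Smz (HN_mu N lam F Vf) ell Vf m z.
  move=> b hb.
  pose a : {ffun 'I_m -> 'I_ell} := [ffun j => Ordinal (proj1 (hlev (b j)))].
  rewrite /H_Smz; apply: (subvP (sumv_sup a _ (subvv _))).
    by under eq_bigr do rewrite ffunE /=.
  rewrite /tens_sub; apply: pure_tensor_span => j.
    by rewrite size_tuple; apply: dimvS; apply: subvf.
  by rewrite ffunE /= (span_basis (vbasisP _)); exact: (proj2 (hlev (b j))).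
have hlow : (n ^ m <= D + #|predC good|)%N.
  apply: (@dim_lower _ V m e good _ _ _ hgood).
    by rewrite /e size_map sP.
  by rewrite /e (span_Pl h0 hl hinc).
have hup : (D <= n ^ m)%N.
  by rewrite -(dim_tensor _ V m); apply: dimvS; apply: subvf.
have hcard : #|predC good| = #|[pred b : {ffun 'I_m -> 'I_n} | \sum_j w (b j) < z%:R]|.
  by apply: eq_card => b; rewrite !inE /good -ltNge.
have hzm : z%:R <= m%:R * M / 2.
  have hK := archi_boundP (x := 2 * z%:R / M) (divr_ge0 (mulr_ge0 (ler0n _ 2) (ler0n _ z)) (ltW M0)).
  have hK' : 2 * z%:R / M < m%:R by apply: (lt_le_trans hK); rewrite ler_nat.
  move: hK'; rewrite Num.Theory.ltr_pdivrMr // => hK'; lra.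
have hcb := @count_bad R n w M z%:R m hM hzm (ltW M0).
rewrite hcard in hlow.
apply: (@ratio_bound R D%:R _ _ m%:R M n%:R Q _ _ M0 _ _ _ hcb).
- by rewrite exprn_gt0 // ltr0n.
- by rewrite ltr0n.
- by rewrite ltr0n.
- by rewrite -natrX -natrD ler_nat.
- by rewrite -natrX ler_nat.
Qed.
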